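(* Let $0\to(M,\alpha_M)\to(K,\alpha_K)\xrightarrow{\pi}(L,\alpha_L)\to0$ be a central extension of Hom-Leibniz $n$-algebras. If $(K,\alpha_K)$ is perfect and every central extension of $(K,\alpha_K)$ splits, then $\pi$ is a universal central extension.
   Context: Fix a field $\mathbb K$ and $n\ge2$. A (multiplicative) Hom-Leibniz $n$-algebra is a $\mathbb K$-vector space $L$ with an $n$-linear bracket and a linear map $\alpha_L$ preserving the bracket, satisfying $[[x_1,\dots,x_n],\alpha_L(y_1),\dots,\alpha_L(y_{n-1})]=\sum_{i=1}^n[\alpha_L(x_1),\dots,[x_i,y_1,\dots,y_{n-1}],\dots,\alpha_L(x_n)]$. Homomorphisms preserve brackets and commute with twisting maps. Perfect: $K=[K,\dots,K]$. Center $Z(K)$: elements $x$ such that every bracket with $x$ in some position equals $0$. An extension of $L$ is a surjective homomorphism $\pi:K\to L$ with kernel $M$; central if $M\subseteq Z(K)$. An extension $\rho:F\to K$ splits if there is a homomorphism $\sigma:K\to F$ with $\rho\circ\sigma=\mathrm{id}_K$. A central extension $\pi:K\to L$ is universal central if for every central extension $\pi':K'\to L$ there is a unique homomorphism $h:K\to K'$ with $\pi'\circ h=\pi$. *)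

(* Defs.v *)
(* Hom-Leibniz n-algebras over a field F, with n = m.+1. *)
From HB Require Import structures.
From mathcomp Require Import all_boot all_order all_algebra.
Set Implicit Arguments. Unset Strict Implicit. Unset Printing Implicit Defensive.
Import GRing.Theory.
Local Open Scope ring_scope.

Definition tsubst (T U : Type) (n : nat) (f : T -> U) (t : n.-tuple T) (i : 'I_n) (v : U)
  : n.-tuple U := [tuple (if j == i then v else f (tnth t j)) | j < n].

Definition linmap (F : fieldType) (V W : lmodType F) (f : V -> W) : Prop :=
  forall (a : F) (x y : V), f (a *: x + y) = a *: f x + f y.

Structure hlalg (F : fieldType) (m : nat) := HLAlg {
  hl_sort :> lmodType F;
  hl_br : m.+1.-tuple hl_sort -> hl_sort;
  hl_alpha : hl_sort -> hl_sort;
  hl_br_multilin : forall (t : m.+1.-tuple hl_sort) (i : 'I_m.+1),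
     linmap (fun x : hl_sort => hl_br (tsubst id t i x));
  hl_alpha_lin : linmap hl_alpha;
  hl_alpha_mult : forall t : m.+1.-tuple hl_sort,
     hl_alpha (hl_br t) = hl_br (map_tuple hl_alpha t);
  hl_leibniz : forall (x : m.+1.-tuple hl_sort) (y : m.-tuple hl_sort),
     hl_br (cons_tuple (hl_br x) (map_tuple hl_alpha y))
     = \sum_(i < m.+1)
         hl_br (tsubst hl_alpha x i (hl_br (cons_tuple (tnth x i) y)))
}.

Section Defs.
Variables (F : fieldType) (m : nat).

Definition hl_hom (A B : hlalg F m) (f : A -> B) : Prop :=
  [/\ linmap f,
      forall t : m.+1.-tuple A, f (hl_br t) = hl_br (map_tuple f t)
    & forall x : A, f (hl_alpha x) = hl_alpha (f x)].

Definition hl_perfect (K : hlalg F m) : Prop :=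
  forall x : K, exists s : seq (F * m.+1.-tuple K),
    x = \sum_(p <- s) p.1 *: hl_br p.2.

Definition hl_center (K : hlalg F m) (x : K) : Prop :=
  forall (t : m.+1.-tuple K) (i : 'I_m.+1), hl_br (tsubst id t i x) = 0.

Definition hl_extension (K L : hlalg F m) (pi : K -> L) : Prop :=
  hl_hom pi /\ forall y : L, exists x : K, pi x = y.

Definition hl_central_extension (K L : hlalg F m) (pi : K -> L) : Prop :=
  hl_extension pi /\ forall x : K, pi x = 0 -> hl_center x.

Definition hl_splits (E K : hlalg F m) (rho : E -> K) : Prop :=
  exists sigma : K -> E, hl_hom sigma /\ forall x : K, rho (sigma x) = x.

Definition hl_universal_central (K L : hlalg F m) (pi : K -> L) : Prop :=
  hl_central_extension pi /\
  forall (K' : hlalg F m) (pi' : K' -> L), hl_central_extension pi' ->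
    exists h : K -> K', [/\ hl_hom h, (forall x, pi' (h x) = pi x)
      & forall h' : K -> K', hl_hom h' -> (forall x, pi' (h' x) = pi x) ->
          forall x, h' x = h x].
End Defs.

(* Main.v *)
From HB Require Import structures.
Require Import Defs.
From mathcomp Require Import all_boot all_order all_algebra.
Set Implicit Arguments. Unset Strict Implicit. Unset Printing Implicit Defensive.
Import GRing.Theory.
Local Open Scope ring_scope.

Section Lin.
Variables (F : fieldType) (V W : lmodType F) (f : V -> W) (hf : linmap f).
Lemma lin0 : f 0 = 0.
Proof.
have := hf 1 0 0; rewrite !scale1r addr0 => H.
apply: (@addrI _ (f 0)); by rewrite addr0 -H.
Qed.
Lemma linD x y : f (x + y) = f x + f y.
Proof. by have := hf 1 x y; rewrite !scale1r. Qed.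
Lemma linZ a x : f (a *: x) = a *: f x.
Proof. by have := hf a x 0; rewrite !addr0 lin0 addr0. Qed.
Lemma linN x : f (- x) = - f x.
Proof. by rewrite -scaleN1r linZ scaleN1r. Qed.
Lemma linB x y : f (x - y) = f x - f y.
Proof. by rewrite linD linN. Qed.
Lemma lin_sum I (r : seq I) (P : pred I) (G : I -> V) :
  f (\sum_(i <- r | P i) G i) = \sum_(i <- r | P i) f (G i).
Proof. exact: (big_morph f linD lin0). Qed.
End Lin.

Lemma tnth_tsubst T U n (f : T -> U) (t : n.-tuple T) i v j :
  tnth (tsubst f t i v) j = if j == i then v else f (tnth t j).
Proof. by rewrite tnth_mktuple. Qed.

Lemma map_tsubst T U V n (g : U -> V) (f : T -> U) (t : n.-tuple T) i v :
  map_tuple g (tsubst f t i v) = tsubst (fun x => g (f x)) t i (g v).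
Proof. apply: eq_from_tnth => j; rewrite tnth_map !tnth_tsubst; by case: ifP. Qed.

Lemma map_tsubst_id T U n (g : T -> U) (t : n.-tuple T) i v :
  map_tuple g (tsubst id t i v) = tsubst id (map_tuple g t) i (g v).
Proof. apply: eq_from_tnth => j; rewrite tnth_map !tnth_tsubst tnth_map; by case: ifP. Qed.

Lemma tsubst_map T U V n (f : U -> V) (g : T -> U) (t : n.-tuple T) i v :
  tsubst f (map_tuple g t) i v = tsubst (fun x => f (g x)) t i v.
Proof. apply: eq_from_tnth => j; by rewrite !tnth_tsubst tnth_map. Qed.

Section Transport.
Variables (F : fieldType) (m : nat) (E : lmodType F)
  (brE : m.+1.-tuple E -> E) (alE : E -> E) (A : hlalg F m) (p : E -> A).
Hypotheses (plin : linmap p)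
  (pbr : forall t, p (brE t) = hl_br (map_tuple p t))
  (pal : forall x, p (alE x) = hl_alpha (p x)).

Lemma tr_multilin t i a x y :
  p (brE (tsubst id t i (a *: x + y)))
  = p (a *: brE (tsubst id t i x) + brE (tsubst id t i y)).
Proof.
rewrite plin !pbr !map_tsubst_id plin; exact: hl_br_multilin.
Qed.

Lemma tr_alin a x y : p (alE (a *: x + y)) = p (a *: alE x + alE y).
Proof. by rewrite pal !plin !pal hl_alpha_lin. Qed.

Lemma tr_mult t : p (alE (brE t)) = p (brE (map_tuple alE t)).
Proof.
rewrite pal !pbr hl_alpha_mult; congr hl_br; apply: eq_from_tnth => j.
by rewrite !tnth_map pal.
Qed.

Lemma tr_leib x y :
  p (brE (cons_tuple (brE x) (map_tuple alE y)))
  = p (\sum_(i < m.+1) brE (tsubst alE x i (brE (cons_tuple (tnth x i) y)))).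
Proof.
rewrite (lin_sum plin) pbr.
have -> : map_tuple p (cons_tuple (brE x) (map_tuple alE y))
   = cons_tuple (hl_br (map_tuple p x)) (map_tuple (@hl_alpha F m A) (map_tuple p y)).
  apply: val_inj => /=; rewrite pbr -!map_comp; congr cons.
  by apply: eq_map => z /=; rewrite pal.
rewrite hl_leibniz; apply: eq_bigr => i _; rewrite pbr map_tsubst pbr.
congr hl_br; apply: eq_from_tnth => j; rewrite !tnth_tsubst tnth_map.
case: (j == i); last by rewrite tnth_map pal.
by congr hl_br; apply: val_inj.
Qed.
End Transport.
Section PB.
Variables (F : fieldType) (m : nat) (K K' L : hlalg F m) (pi : K -> L) (pi' : K' -> L).
Hypotheses (hpi : hl_hom pi) (hpi' : hl_hom pi').
Definition pbS : {pred (K * K')} := fun x => pi x.1 == pi' x.2.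
Lemma pbS_closed : GRing.submod_closed pbS.
Proof.
case: hpi => l1 _ _; case: hpi' => l2 _ _.
split; first by rewrite unfold_in /= (lin0 l1) (lin0 l2).
move=> a [u1 u2] [v1 v2]; rewrite !unfold_in /= l1 l2 => /eqP -> /eqP ->.
by [].
Qed.
HB.instance Definition _ := GRing.isSubmodClosed.Build F (K * K')%type pbS
  (GRing.submod_closed_semi pbS_closed).
Record pbT := PBT { pbval : K * K'; _ : pbval \in pbS }.
HB.instance Definition _ := [isSub for pbval].
HB.instance Definition _ := [Choice of pbT by <:].
HB.instance Definition _ := [SubChoice_isSubLmodule of pbT by <:].
Definition p1 (e : pbT) : K := (pbval e).1.
Definition p2 (e : pbT) : K' := (pbval e).2.
Lemma pbP e : pi (p1 e) = pi' (p2 e).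
Proof. by have := valP e; rewrite unfold_in => /eqP. Qed.
Lemma pb_inj (u v : pbT) : p1 u = p1 v -> p2 u = p2 v -> u = v.
Proof.
move=> h1 h2; apply: val_inj; move: h1 h2; rewrite /p1 /p2 /=.
by case: (pbval u) => a b; case: (pbval v) => c d /= -> ->.
Qed.
Lemma p1_lin : linmap p1. Proof. by []. Qed.
Lemma p2_lin : linmap p2. Proof. by []. Qed.
Lemma brE_subproof (t : m.+1.-tuple pbT) :
  (hl_br (map_tuple p1 t), hl_br (map_tuple p2 t)) \in pbS.
Proof.
case: hpi => _ b1 _; case: hpi' => _ b2 _.
rewrite unfold_in /= b1 b2; apply/eqP; congr hl_br.
apply: eq_from_tnth => j; rewrite !tnth_map; exact: pbP.
Qed.
Definition brE t := PBT (brE_subproof t).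
Lemma alE_subproof (e : pbT) : (hl_alpha (p1 e), hl_alpha (p2 e)) \in pbS.
Proof.
case: hpi => _ _ a1; case: hpi' => _ _ a2.
by rewrite unfold_in /= a1 a2 pbP.
Qed.
Definition alE e := PBT (alE_subproof e).

Lemma p1br t : p1 (brE t) = hl_br (map_tuple p1 t). Proof. by []. Qed.
Lemma p2br t : p2 (brE t) = hl_br (map_tuple p2 t). Proof. by []. Qed.
Lemma p1al e : p1 (alE e) = hl_alpha (p1 e). Proof. by []. Qed.
Lemma p2al e : p2 (alE e) = hl_alpha (p2 e). Proof. by []. Qed.

Lemma pbE_multilin t i : linmap (fun x => brE (tsubst id t i x)).
Proof.
move=> a x y; apply: pb_inj.
  exact: (tr_multilin p1_lin p1br).
exact: (tr_multilin p2_lin p2br).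
Qed.
Lemma pbE_alin : linmap alE.
Proof.
move=> a x y; apply: pb_inj.
  exact: (tr_alin p1_lin p1al).
exact: (tr_alin p2_lin p2al).
Qed.
Lemma pbE_mult t : alE (brE t) = brE (map_tuple alE t).
Proof.
apply: pb_inj.
  exact: (tr_mult p1br p1al).
exact: (tr_mult p2br p2al).
Qed.
Lemma pbE_leib x y : brE (cons_tuple (brE x) (map_tuple alE y))
     = \sum_(i < m.+1) brE (tsubst alE x i (brE (cons_tuple (tnth x i) y))).
Proof.
apply: pb_inj.
  exact: (tr_leib p1_lin p1br p1al).
exact: (tr_leib p2_lin p2br p2al).
Qed.

Definition pbAlg := @HLAlg F m (GRing.Lmodule.clone F pbT _) brE alE
   pbE_multilin pbE_alin pbE_mult pbE_leib.

Lemma p1_central :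
  (forall y, exists x, pi' x = y) -> (forall x, pi' x = 0 -> hl_center x) ->
  @hl_central_extension F m pbAlg K p1.
Proof.
move=> surj cen; split; first split.
- split; [exact: p1_lin | by [] | by []].
- move=> k; have [k' hk'] := surj (pi k).
  have hk : (k, k') \in pbS by rewrite unfold_in /= hk'.
  by exists (PBT hk).
- move=> e he t i; apply: pb_inj.
    rewrite p1br map_tsubst_id he.
    exact: (lin0 (hl_br_multilin (map_tuple p1 t) i)).
  rewrite p2br map_tsubst_id; apply: cen.
  case: hpi => l1 _ _.
  by rewrite -pbP he (lin0 l1).
Qed.
End PB.

Lemma br_central_eq (F : fieldType) (m : nat) (A : hlalg F m) (t1 t2 : m.+1.-tuple A) :
  (forall j, hl_center (tnth t1 j - tnth t2 j)) -> hl_br t1 = hl_br t2.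
Proof.
move=> hc.
pose s k := [tuple (if (j < k)%N then tnth t2 j else tnth t1 j) | j < m.+1].
have step k (hk : (k < m.+1)%N) : hl_br (s k) = hl_br (s k.+1).
  pose ik := Ordinal hk.
  have e1 : s k = tsubst id (s k) ik (tnth t1 ik).
    apply: eq_from_tnth => j; rewrite tnth_tsubst !tnth_mktuple.
    have hj : (j == ik) = (j == k :> nat) by [].
    rewrite hj; case: eqP => [hjk|] //=; rewrite hjk ltnn.
    by congr tnth; apply: val_inj.
  have e2 : s k.+1 = tsubst id (s k) ik (tnth t2 ik).
    apply: eq_from_tnth => j; rewrite tnth_tsubst !tnth_mktuple.
    have hj : (j == ik) = (j == k :> nat) by [].
    rewrite hj ltnS leq_eqVlt; case: eqP => [hjk|] //=.
    by congr tnth; apply: val_inj.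
  apply/eqP; rewrite -subr_eq0; apply/eqP.
  rewrite e2 {1}e1.
  have := linB (hl_br_multilin (s k) ik) (tnth t1 ik) (tnth t2 ik).
  move=> /= <-; exact: hc.
have main k : (k <= m.+1)%N -> hl_br t1 = hl_br (s k).
  elim: k => [_|k IH hk].
    by congr hl_br; apply: eq_from_tnth => j; rewrite tnth_mktuple.
  rewrite IH ?(ltnW hk) //; exact: step.
rewrite (main m.+1 (leqnn _)); congr hl_br; apply: eq_from_tnth => j.
by rewrite tnth_mktuple ltn_ord.
Qed.

Theorem theorem3p11 (F : fieldType) (m : nat) (hm : (1 <= m)%N)
  (K L : hlalg F m) (pi : K -> L) :
  hl_central_extension pi ->
  hl_perfect K ->
  (forall (E : hlalg F m) (rho : E -> K), hl_central_extension rho -> hl_splits rho) ->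
  hl_universal_central pi.
Proof.
move=> hpi perf split_h; split => // K' pi' hpi'.
case: hpi => [[hompi surjpi] cenpi]; case: hpi' => [[hompi' surjpi'] cenpi'].
have [sigma [homs ids]] := split_h _ _ (p1_central hompi hompi' surjpi' cenpi').
pose h x := p2 (sigma x).
have homh : hl_hom h.
  case: homs => ls bs as_; split.
  - by move=> a x y; rewrite /h ls.
  - move=> t; rewrite /h bs /=; congr hl_br; apply: val_inj.
    by rewrite /= -map_comp.
  - by move=> x; rewrite /h as_.
have hh : forall x, pi' (h x) = pi x.
  by move=> x; rewrite /h -pbP ids.
exists h; split => // h' homh' hh' x.
case: homh => lh bh _; case: homh' => lh' bh' _.
have cen u : hl_center (h' u - h u).
  by apply: cenpi'; rewrite (linB (let: And3 l _ _ := hompi' in l)) hh' hh subrr.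
have [s ->] := perf x.
rewrite (lin_sum lh') (lin_sum lh); apply: eq_bigr => q _.
rewrite (linZ lh') bh' (linZ lh) bh; congr (_ *: _).
apply: br_central_eq => j; rewrite !tnth_map; exact: cen.
Qed.
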